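(* Let $\Phi$ be a set composition of $[n]$. Then $$\mathbf{F}_\Phi=\sum_{\Psi\text{ reforms }\Phi}\mathbf{M}_\Psi,$$ and hence $\{\mathbf{F}_\Phi\}$ (over all set compositions $\Phi$) is a basis of $\mathrm{NCQSym}(\mathbf{x})$.
   Context: A set composition $\Phi=(\Phi_1|\cdots|\Phi_k)$ of $[n]$ is an ordered list of disjoint nonempty sets with union $[n]$; blocks are written with elements in increasing order. $\Psi$ reforms $\Phi$ if $\Psi$ is obtained from $\Phi$ (written as a word with bars) by inserting some bars, the numbers remaining in the same order; e.g. $(1|3|2|4|56)$ reforms $(13|2|4|56)$ but $(3|1|2|4|56)$ does not. $\mathbf{M}_\Phi=\sum\mathbf{x}_{i_1}\cdots\mathbf{x}_{i_n}$ (noncommuting variables) over tuples with $i_j=i_\ell$ if $j,\ell$ are in the same block and $i_j<i_\ell$ if $j\in\Phi_p,\ell\in\Phi_q$, $p<q$. $\mathrm{NCQSym}(\mathbf{x})$ is the space of bounded-degree noncommutative series in which, for each set composition, all such monomials have equal coefficients. An edge-coloured digraph is a finite simple digraph with each edge dashed, solid ($\rightarrow$) or double ($\Rightarrow$); proper vertex-colourings $\kappa:V\to\mathbb{P}$ satisfy $\kappa(a)\ne\kappa(b)$, $\kappa(a)<\kappa(b)$, $\kappa(a)\le\kappa(b)$ for dashed, solid, double edges $(a,b)$. For a labelling bijection $L:V(G)\to[|V(G)|]$, $\mathscr{Y}_{(G,L)}(\mathbf{x})=\sum_\kappa\mathbf{x}_{\kappa(L^{-1}(1))}\cdots\mathbf{x}_{\kappa(L^{-1}(|V(G)|))}$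 over proper vertex-colourings. For a finite $A=\{a_1<\dots<a_m\}\subseteq\mathbb{P}$, $Q_A$ is the directed path $v_1\Rightarrow v_2\Rightarrow\cdots\Rightarrow v_m$ (double edges) with $v_i$ labelled $a_i$. The solid sum of two labelled digraphs is their disjoint union with a solid edge from every vertex of the first to every vertex of the second. Define $\mathbf{F}_\Phi=\mathscr{Y}_{(G,L)}(\mathbf{x})$ with $(G,L)=Q_{\Phi_1}$ solid-sum $Q_{\Phi_2}$ solid-sum $\cdots$ solid-sum $Q_{\Phi_k}$. *)

(* Defs.v *)
From mathcomp Require Import all_boot all_order all_algebra.
Set Implicit Arguments.
Unset Strict Implicit.
Unset Printing Implicit Defensive.
Import GRing.Theory.

(* Conventions:
   - the variable x_i (i in P = {1,2,...}) is represented by the letter i-1 : nat;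
     a noncommutative monomial is a word (seq nat), a noncommutative series with
     coefficients in R is a function word -> R (coefficient of each monomial).
   - [n] = {1..n} is represented by 'I_n (j : 'I_n stands for j+1); labels of
     labelled digraphs are likewise shifted by one (label a stands for a+1). *)

Definition word := seq nat.
Definition series (R : Type) := word -> R.

Definition is_setcomp n (Phi : seq {set 'I_n}) : bool :=
  [&& all (fun B : {set 'I_n} => B != set0) Phi,
      pairwise (fun A B : {set 'I_n} => [disjoint A & B]) Phi &
      [forall j : 'I_n, has (fun B : {set 'I_n} => j \in B) Phi]].

Definition blk n (Phi : seq {set 'I_n}) (j : 'I_n) : nat :=
  find (fun B : {set 'I_n} => j \in B) Phi.

Definition block_word n (B : {set 'I_n}) : seq nat :=
  sort leq [seq val i | i <- enum B].

Definition cword n (Phi : seq {set 'I_n}) : seq nat :=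
  flatten [seq block_word B | B <- Phi].

(* positions of the bars in Phi written as a word with bars *)
Definition bars n (Phi : seq {set 'I_n}) : seq nat :=
  [seq sumn (take k [seq size (block_word B) | B <- Phi]) | k <- iota 0 (size Phi).+1].

Definition reforms n (Psi Phi : seq {set 'I_n}) : bool :=
  (cword Psi == cword Phi) && all (fun b => b \in bars Psi) (bars Phi).

Definition matches n (Phi : seq {set 'I_n}) (w : word) : bool :=
  (size w == n) &&
  [forall j : 'I_n, forall l : 'I_n,
     ((blk Phi j == blk Phi l) ==> (nth 0 w j == nth 0 w l)) &&
     ((blk Phi j < blk Phi l) ==> (nth 0 w j < nth 0 w l))].

Definition Mser (R : nzRingType) n (Phi : seq {set 'I_n}) : series R :=
  fun w => ((matches Phi w)%:R)%R.

Inductive ecol := Dashed | Solid | Double.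

(* a labelled digraph: vertices identified with their (distinct) labels;
   lg_edge a b = Some c  iff there is an edge (a,b) of colour c *)
Record lgraph := LGraph { lg_vert : seq nat; lg_edge : nat -> nat -> option ecol }.

Definition proper_edge (c : ecol) (x y : nat) : bool :=
  match c with
  | Dashed => x != y
  | Solid => x < y
  | Double => x <= y
  end.

(* Y_(G,L): coefficient of the word w is the number of proper colourings
   kappa with kappa(L^-1(j)) = w_j for all j, i.e. 1 if the colouring
   a |-> w_a is proper (and the labels are exactly [|w|]), else 0. *)
Definition Yser (R : nzRingType) (G : lgraph) : series R := fun w =>
  (perm_eq (lg_vert G) (iota 0 (size w)) &&
   all (fun a => all (fun b =>
          if lg_edge G a b is Some c then proper_edge c (nth 0 w a) (nth 0 w b)
          else true) (lg_vert G)) (lg_vert G))%:R%R.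

(* Q_A: double-edge path through the elements of A in increasing order *)
Definition Qgraph (A : seq nat) : lgraph :=
  let s := sort leq A in
  LGraph s (fun a b =>
    if has (fun i => (nth 0 s i == a) && (nth 0 s i.+1 == b)) (iota 0 (size s).-1)
    then Some Double else None).

(* solid sum (for graphs with disjoint label sets) *)
Definition ssum (G H : lgraph) : lgraph :=
  LGraph (lg_vert G ++ lg_vert H) (fun a b =>
    if (a \in lg_vert G) && (b \in lg_vert G) then lg_edge G a b
    else if (a \in lg_vert H) && (b \in lg_vert H) then lg_edge H a b
    else if (a \in lg_vert G) && (b \in lg_vert H) then Some Solid
    else None).

Definition lg_empty : lgraph := LGraph [::] (fun _ _ => None).

Definition Fgraph n (Phi : seq {set 'I_n}) : lgraph :=
  foldr ssum lg_empty [seq Qgraph (block_word B) | B <- Phi].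

Definition Fser (R : nzRingType) n (Phi : seq {set 'I_n}) : series R :=
  Yser R (Fgraph Phi).

Definition bounded_degree (R : nzRingType) (f : series R) : Prop :=
  exists d : nat, forall w : word, (d < size w)%N -> f w = 0%R.

Definition in_NCQSym (R : nzRingType) (f : series R) : Prop :=
  bounded_degree f /\
  forall n (Phi : seq {set 'I_n}), is_setcomp Phi ->
    forall u v : word, matches Phi u -> matches Phi v -> f u = f v.

(* finite sum over all set compositions Psi of [n] satisfying P
   (each has at most n blocks, so is a k-tuple of sets for a unique k <= n) *)
Definition sum_setcomp (R : nzRingType) n (P : seq {set 'I_n} -> bool)
    (G : seq {set 'I_n} -> R) : R :=
  (\sum_(k < n.+1) \sum_(Psi : k.-tuple {set 'I_n} | is_setcomp Psi && P Psi) G Psi)%R.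

(* Main.v *)
Require Import Defs.
From mathcomp Require Import all_boot all_order all_algebra.
From mathcomp Require Import zify.
Import GRing.Theory.
Set Implicit Arguments.
Unset Strict Implicit.
Unset Printing Implicit Defensive.


Lemma mem_bw n (B : {set 'I_n}) (j : 'I_n) : (val j \in block_word B) = (j \in B).
Proof. by rewrite /block_word mem_sort (mem_map val_inj) mem_enum. Qed.

Lemma bw_ord n (B : {set 'I_n}) x : x \in block_word B -> exists2 j : 'I_n, j \in B & x = val j.
Proof. by rewrite /block_word mem_sort => /mapP [j]; rewrite mem_enum => jB ->; exists j. Qed.

Lemma bw_sorted n (B : {set 'I_n}) : sorted leq (block_word B).
Proof. rewrite /block_word; apply: sort_sorted; exact: leq_total. Qed.

Lemma bw_uniq n (B : {set 'I_n}) : uniq (block_word B).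
Proof. by rewrite /block_word sort_uniq (map_inj_uniq val_inj) enum_uniq. Qed.

Lemma bw_size n (B : {set 'I_n}) : B != set0 -> 0 < size (block_word B).
Proof.
case/set0Pn => j jB; rewrite lt0n size_eq0; apply/eqP => h.
by have := mem_bw B j; rewrite h jB.
Qed.

Definition bk n (Phi : seq {set 'I_n}) (x : nat) : nat :=
  find (fun B => x \in block_word B) Phi.

Lemma bk_blk n (Phi : seq {set 'I_n}) (j : 'I_n) : bk Phi (val j) = blk Phi j.
Proof. by apply: eq_find => B; rewrite mem_bw. Qed.

Lemma scP n (Phi : seq {set 'I_n}) : is_setcomp Phi ->
  [/\ forall B, B \in Phi -> B != set0,
      pairwise (fun A B : {set 'I_n} => [disjoint A & B]) Phi &
      forall j : 'I_n, has (fun B : {set 'I_n} => j \in B) Phi].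
Proof.
case/and3P => /allP h1 h2 /forallP h3; split => //.
Qed.

Lemma blk_lt n (Phi : seq {set 'I_n}) j : is_setcomp Phi -> blk Phi j < size Phi.
Proof. by case/scP => _ _ h; rewrite /blk -has_find. Qed.

Lemma mem_nth_blk n (Phi : seq {set 'I_n}) j : is_setcomp Phi -> j \in nth set0 Phi (blk Phi j).
Proof. by case/scP => _ _ h; apply: (nth_find set0 (h j)). Qed.

Lemma blk_mem n (Phi : seq {set 'I_n}) j q : is_setcomp Phi -> q < size Phi ->
  (j \in nth set0 Phi q) = (blk Phi j == q).
Proof.
move=> sc qs; apply/idP/eqP; last by move<-; apply: mem_nth_blk.
move=> jq; case: (ltngtP (blk Phi j) q) => // h.
- have := mem_nth_blk j sc; case/scP: sc => _ /(pairwiseP set0) hp _.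
  have := hp (blk Phi j) q; rewrite !inE (leq_trans h (ltnW qs)) qs => /(_ isT isT h).
  by move/disjointFr => d /d; rewrite jq.
- by have := before_find set0 h; rewrite jq.
Qed.

Lemma blk_ex n (Phi : seq {set 'I_n}) q : is_setcomp Phi -> q < size Phi ->
  exists j, blk Phi j = q.
Proof.
move=> sc qs; case/scP: (sc) => h1 _ _.
have := h1 _ (mem_nth set0 qs); case/set0Pn => j jq; exists j.
by apply/eqP; rewrite -blk_mem.
Qed.

Lemma sc_det n (Psi Phi : seq {set 'I_n}) : is_setcomp Psi -> is_setcomp Phi ->
  (forall j, blk Psi j = blk Phi j) -> Psi = Phi.
Proof.
move=> s1 s2 h.
have hs : size Psi = size Phi.
  case: (ltngtP (size Psi) (size Phi)) => // c.
  - by case: (blk_ex s2 c) => j hj; have := blk_lt j s1; rewrite h hj ltnn.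
  - by case: (blk_ex s1 c) => j hj; have := blk_lt j s2; rewrite -h hj ltnn.
apply: (eq_from_nth (x0 := set0)) => [//|q qs]; apply/setP => j.
by rewrite (blk_mem _ s1 qs) (blk_mem _ s2) ?h // -hs.
Qed.

Lemma blk_le n (Psi Phi : seq {set 'I_n}) : is_setcomp Psi -> is_setcomp Phi ->
  (forall j l, blk Psi j < blk Psi l -> blk Phi j < blk Phi l) ->
  forall j, blk Psi j <= blk Phi j.
Proof.
move=> s1 s2 h.
suff: forall q j, blk Psi j = q -> q <= blk Phi j by move=> H j; exact: H.
elim=> [//|q IH] j hj.
have qs : q < size Psi by apply: ltn_trans (blk_lt j s1); rewrite hj.
case: (blk_ex s1 qs) => r hr.
have := h r j; rewrite hr hj ltnSn => /(_ isT).
by apply: leq_trans; rewrite ltnS IH.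
Qed.


Definition okg (G : lgraph) (w : word) : bool :=
  all (fun a => all (fun b =>
          if lg_edge G a b is Some c then proper_edge c (nth 0 w a) (nth 0 w b)
          else true) (lg_vert G)) (lg_vert G).

Definition wle (w : word) := fun a b => nth 0 w a <= nth 0 w b.
Definition wlt (w : word) := fun a b => nth 0 w a < nth 0 w b.

Lemma okQ A w : okg (Qgraph A) w = sorted (wle w) (sort leq A).
Proof.
rewrite /okg /=; set s := sort leq A.
apply/idP/idP.
- move=> /allP h; apply/(sortedP 0) => i hi.
  have ai : nth 0 s i \in s by apply: mem_nth; apply: ltnW.
  have bi : nth 0 s i.+1 \in s by apply: mem_nth.
  have := allP (h _ ai) _ bi.
  have -> : has (fun k => (nth 0 s k == nth 0 s i) && (nth 0 s k.+1 == nth 0 s i.+1)) (iota 0 (size s).-1).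
    apply/hasP; exists i; last by rewrite !eqxx.
    by rewrite mem_iota /=; lia.
  by [].
- move=> /(sortedP 0) h; apply/allP => a _; apply/allP => b _.
  case: ifP => // /hasP [i]; rewrite mem_iota => /andP [_ hi] /andP [/eqP <- /eqP <-].
  by apply: h; lia.
Qed.

Lemma mem_catl (T : eqType) (s1 s2 : seq T) x : x \in s1 -> x \in s1 ++ s2.
Proof. by rewrite mem_cat => ->. Qed.
Lemma mem_catr (T : eqType) (s1 s2 : seq T) x : x \in s2 -> x \in s1 ++ s2.
Proof. by rewrite mem_cat orbC => ->. Qed.

Definition ssum_verts G H : lg_vert (ssum G H) = lg_vert G ++ lg_vert H := erefl.

Lemma ok_ssum G H w : (forall x, x \in lg_vert G -> x \notin lg_vert H) ->
  okg (ssum G H) w = [&& okg G w, okg H w & allrel (wlt w) (lg_vert G) (lg_vert H)].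
Proof.
move=> dis; rewrite /okg /=; apply/idP/idP.
- move=> /allP h; apply/and3P; split.
  + apply/allP => a aG; apply/allP => b bG.
    by have := allP (h a (mem_catl _ aG)) b (mem_catl _ bG); rewrite aG bG.
  + apply/allP => a aH; apply/allP => b bH.
    have aG : a \notin lg_vert G by apply/negP => /dis; rewrite aH.
    have bG : b \notin lg_vert G by apply/negP => /dis; rewrite bH.
    have := allP (h a (mem_catr _ aH)) b (mem_catr _ bH).
    by rewrite (negbTE aG) aH bH.
  + apply/allrelP => a b aG bH.
    have bG : b \notin lg_vert G by apply/negP => /dis; rewrite bH.
    have aH : a \notin lg_vert H by apply: dis.
    have := allP (h a (mem_catl _ aG)) b (mem_catr _ bH).
    by rewrite aG (negbTE bG) (negbTE aH) bH.
- case/and3P => /allP hG /allP hH /allrelP hGH.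
  apply/allP => a; rewrite mem_cat => /orP [aG|aH]; apply/allP => b; rewrite mem_cat => /orP [bG|bH].
  + by rewrite aG bG; apply: (allP (hG a aG)).
  + have bG : b \notin lg_vert G by apply/negP => /dis; rewrite bH.
    have aH : a \notin lg_vert H by apply: dis.
    by rewrite aG (negbTE bG) (negbTE aH) bH /=; apply: hGH.
  + have aG : a \notin lg_vert G by apply/negP => /dis; rewrite aH.
    by rewrite (negbTE aG) /= (negbTE (dis _ bG)) andbF.
  + have aG : a \notin lg_vert G by apply/negP => /dis; rewrite aH.
    have bG : b \notin lg_vert G by apply/negP => /dis; rewrite bH.
    by rewrite (negbTE aG) aH bH /=; apply: (allP (hH a aH)).
Qed.

Lemma sort_bw n (B : {set 'I_n}) : sort leq (block_word B) = block_word B.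
Proof. apply: sorted_sort; [exact: leq_trans | exact: bw_sorted]. Qed.

Lemma vert_F n (Phi : seq {set 'I_n}) : lg_vert (Fgraph Phi) = cword Phi.
Proof. by elim: Phi => //= B Phi IH; rewrite IH sort_bw. Qed.

Lemma mem_cword n (Phi : seq {set 'I_n}) x :
  (x \in cword Phi) = has (fun B => x \in block_word B) Phi.
Proof.
rewrite /cword; elim: Phi => //= B Phi IH; by rewrite mem_cat IH.
Qed.

Lemma vert_Q A : lg_vert (Qgraph A) = sort leq A.
Proof. by []. Qed.

Lemma okF n (Phi : seq {set 'I_n}) w :
  pairwise (fun A B : {set 'I_n} => [disjoint A & B]) Phi ->
  okg (Fgraph Phi) w = all (fun B => sorted (wle w) (block_word B)) Phi &&
     pairwise (fun B C => allrel (wlt w) (block_word B) (block_word C)) Phi.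
Proof.
elim: Phi => [|B Phi IH] //= => /andP [/allP hB hp].
have -> : Fgraph (B :: Phi) = ssum (Qgraph (block_word B)) (Fgraph Phi) by [].
rewrite ok_ssum.
- rewrite okQ sort_bw IH // vert_Q sort_bw vert_F.
  have -> : allrel (wlt w) (block_word B) (cword Phi) =
            all (fun C => allrel (wlt w) (block_word B) (block_word C)) Phi.
    apply/allrelP/allP => h.
    + move=> C CP; apply/allrelP => a b aB bC; apply: h => //.
      by rewrite mem_cword; apply/hasP; exists C.
    + move=> a b aB; rewrite mem_cword => /hasP [C CP bC].
      by have /allrelP := h C CP; apply.
  by rewrite -!andbA; congr [&& _, _ & _]; rewrite andbC.
- move=> x; rewrite vert_Q sort_bw vert_F mem_cword => xB; apply/hasP => [[C CP xC]].
  case: (bw_ord xB) => j jB xj; move: xC; rewrite xj mem_bw.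
  by rewrite (disjointFr (hB C CP) jB).
Qed.


Definition Fcond n (Phi : seq {set 'I_n}) (w : word) : bool :=
  (size w == n) && [forall j : 'I_n, forall l : 'I_n,
     ((blk Phi j == blk Phi l) && (j <= l) ==> (nth 0 w j <= nth 0 w l)) &&
     ((blk Phi j < blk Phi l) ==> (nth 0 w j < nth 0 w l))].

Lemma FcondP n (Phi : seq {set 'I_n}) w : Fcond Phi w ->
  size w = n /\ forall j l : 'I_n,
     (blk Phi j = blk Phi l -> j <= l -> nth 0 w j <= nth 0 w l) /\
     (blk Phi j < blk Phi l -> nth 0 w j < nth 0 w l).
Proof.
case/andP => /eqP -> /forallP h; split => // j l.
have /andP [h1 h2] := forallP (h j) l; split.
- by move=> e le; apply: (implyP h1); rewrite e eqxx le.
- by move=> lt; apply: (implyP h2).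
Qed.

Lemma sorted2 (r : rel nat) s x y : transitive r -> reflexive r ->
  sorted leq s -> sorted r s -> x \in s -> y \in s -> x <= y -> r x y.
Proof.
move=> tr rf sl sr xs ys le.
apply: (sorted_leq_index tr rf sr) => //.
rewrite leqNgt; apply/negP => lt.
have le2 := sorted_ltn_index leq_trans sl y x ys xs lt.
have exy : x = y by apply/eqP; rewrite eqn_leq le le2.
by move: lt; rewrite exy ltnn.
Qed.

Lemma Fok n (Phi : seq {set 'I_n}) w : is_setcomp Phi ->
  (all (fun B => sorted (wle w) (block_word B)) Phi &&
   pairwise (fun B C => allrel (wlt w) (block_word B) (block_word C)) Phi) =
  [forall j : 'I_n, forall l : 'I_n,
     ((blk Phi j == blk Phi l) && (j <= l) ==> (nth 0 w j <= nth 0 w l)) &&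
     ((blk Phi j < blk Phi l) ==> (nth 0 w j < nth 0 w l))].
Proof.
move=> sc; apply/idP/idP.
- case/andP => /allP hs /(pairwiseP set0) hp.
  apply/forallP => j; apply/forallP => l; apply/andP; split; apply/implyP.
  + case/andP => /eqP e le.
    have bs := blk_lt j sc.
    have := hs _ (mem_nth set0 bs) => srt.
    apply: (sorted2 (r := wle w) _ _ (bw_sorted _) srt) => //.
    * by move=> a b c; rewrite /wle; apply: leq_trans.
    * by move=> a; rewrite /wle.
    * by rewrite mem_bw mem_nth_blk.
    * by rewrite mem_bw e mem_nth_blk.
  + move=> lt.
    have := hp (blk Phi j) (blk Phi l); rewrite !inE !blk_lt // => /(_ isT isT lt).
    move/allrelP; apply.
    * by rewrite mem_bw mem_nth_blk.
    * by rewrite mem_bw mem_nth_blk.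
- move=> /forallP h.
  have H j l : (blk Phi j = blk Phi l -> j <= l -> nth 0 w j <= nth 0 w l) /\
     (blk Phi j < blk Phi l -> nth 0 w j < nth 0 w l).
    have /andP [h1 h2] := forallP (h j) l; split.
    - by move=> e le; apply: (implyP h1); rewrite e eqxx le.
    - by move=> lt; apply: (implyP h2).
  apply/andP; split.
  + apply/allP => B BP.
    have qs : index B Phi < size Phi by rewrite index_mem.
    have eB : nth set0 Phi (index B Phi) = B by rewrite nth_index.
    apply/(sortedP 0) => i hi.
    have xi : nth 0 (block_word B) i \in block_word B by apply: mem_nth; apply: ltnW.
    have yi : nth 0 (block_word B) i.+1 \in block_word B by apply: mem_nth.
    have := (sortedP 0 (bw_sorted B)) i hi.
    case: (bw_ord xi) => j jB ->; case: (bw_ord yi) => l lB -> le.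
    have ej : blk Phi j = index B Phi by apply/eqP; rewrite -blk_mem // eB.
    have el : blk Phi l = index B Phi by apply/eqP; rewrite -blk_mem // eB.
    by apply: (H j l).1 => //; rewrite ej el.
  + apply/(pairwiseP set0) => p q; rewrite !inE => ps qs pq.
    apply/allrelP => x y.
    case/bw_ord => j jB ->; case/bw_ord => l lB ->.
    have ej : blk Phi j = p by apply/eqP; rewrite -blk_mem.
    have el : blk Phi l = q by apply/eqP; rewrite -blk_mem.
    by apply: (H j l).2; rewrite ej el.
Qed.

Lemma cword_uniq n (Phi : seq {set 'I_n}) :
  pairwise (fun A B : {set 'I_n} => [disjoint A & B]) Phi -> uniq (cword Phi).
Proof.
rewrite /cword; elim: Phi => [|B Phi IH] //= /andP [/allP hB hp].
rewrite cat_uniq bw_uniq IH // andbT; apply/hasPn => x xP; apply/negP => xB.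
have : x \in cword Phi by [].
rewrite mem_cword => /hasP [C CP xC].
case: (bw_ord xB) => j jB xj; move: xC; rewrite xj mem_bw.
by rewrite (disjointFr (hB C CP) jB).
Qed.

Lemma mem_cword_lt n (Phi : seq {set 'I_n}) x : is_setcomp Phi ->
  (x \in cword Phi) = (x < n).
Proof.
move=> sc; rewrite mem_cword; apply/hasP/idP.
- by case=> B _ xB; case: (bw_ord xB) => j _ ->; apply: ltn_ord.
- move=> xn; case/scP: sc => _ _ /(_ (Ordinal xn)) /hasP [B BP jB].
  by exists B => //; have := mem_bw B (Ordinal xn); rewrite jB.
Qed.

Lemma cword_perm n (Phi : seq {set 'I_n}) : is_setcomp Phi ->
  perm_eq (cword Phi) (iota 0 n).
Proof.
move=> sc; apply: uniq_perm.
- by apply: cword_uniq; case/scP: sc.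
- exact: iota_uniq.
- by move=> x; rewrite mem_cword_lt // mem_iota.
Qed.

Lemma size_cword n (Phi : seq {set 'I_n}) : is_setcomp Phi -> size (cword Phi) = n.
Proof. by move/cword_perm/perm_size; rewrite size_iota. Qed.

Lemma Fchar (R : nzRingType) n (Phi : seq {set 'I_n}) w : is_setcomp Phi ->
  Fser R Phi w = ((Fcond Phi w)%:R)%R.
Proof.
move=> sc.
have -> : Fser R Phi w = ((perm_eq (lg_vert (Fgraph Phi)) (iota 0 (size w)) && okg (Fgraph Phi) w)%:R)%R by [].
rewrite vert_F okF; last by case/scP: sc.
rewrite Fok // /Fcond; congr ((_ && _)%:R)%R.
rewrite (permPl (cword_perm sc)); apply/idP/eqP => [/perm_size|->//].
by rewrite !size_iota.
Qed.


Definition pw n (Phi : seq {set 'I_n}) : word := [seq blk Phi j | j <- enum 'I_n].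

Lemma size_pw n (Phi : seq {set 'I_n}) : size (pw Phi) = n.
Proof. by rewrite /pw size_map size_enum_ord. Qed.

Lemma nth_pw n (Phi : seq {set 'I_n}) (j : 'I_n) : nth 0 (pw Phi) j = blk Phi j.
Proof. by rewrite /pw (nth_map j) ?size_enum_ord // nth_ord_enum. Qed.

Lemma matches_size m (Psi : seq {set 'I_m}) u : matches Psi u -> size u = m.
Proof. by case/andP => /eqP. Qed.

Lemma matches_lt m (Psi : seq {set 'I_m}) u : matches Psi u ->
  forall j l : 'I_m, (nth 0 u j < nth 0 u l) = (blk Psi j < blk Psi l).
Proof.
case/andP => _ /forallP h j l.
have /andP [h1 h2] := forallP (h j) l; have /andP [h3 h4] := forallP (h l) j.
case: (ltngtP (blk Psi j) (blk Psi l)) => c.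
- exact: (implyP h2).
- by apply/negbTE; rewrite -leqNgt ltnW // (implyP h4).
- by rewrite (eqP (implyP h1 _)) ?ltnn // c.
Qed.

Lemma Fcond_iso n (Phi : seq {set 'I_n}) u v : size u = size v ->
  (forall i k, i < size u -> k < size u -> (nth 0 u i < nth 0 u k) = (nth 0 v i < nth 0 v k)) ->
  Fcond Phi u = Fcond Phi v.
Proof.
move=> su h; rewrite /Fcond su; case: eqP => //= hn.
apply: eq_forallb => j; apply: eq_forallb => l.
have hj : j < size u by rewrite su hn.
have hl : l < size u by rewrite su hn.
by rewrite !(leqNgt (nth 0 _ _)) (h l j) // (h j l).
Qed.

Lemma matches_iso m (Psi : seq {set 'I_m}) u v : matches Psi u -> matches Psi v ->
  size u = size v /\
  forall i k, i < size u -> k < size u -> (nth 0 u i < nth 0 u k) = (nth 0 v i < nth 0 v k).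
Proof.
move=> hu hv; rewrite (matches_size hu) (matches_size hv); split => // i k hi hk.
have := matches_lt hu (Ordinal hi) (Ordinal hk); have := matches_lt hv (Ordinal hi) (Ordinal hk).
by move=> /= -> ->.
Qed.

Lemma matches_pw n (Phi : seq {set 'I_n}) : matches Phi (pw Phi).
Proof.
rewrite /matches size_pw eqxx /=; apply/forallP => j; apply/forallP => l.
by rewrite !nth_pw; apply/andP; split; apply/implyP.
Qed.

Lemma Fcond_self n (Phi : seq {set 'I_n}) : Fcond Phi (pw Phi).
Proof.
rewrite /Fcond size_pw eqxx /=; apply/forallP => j; apply/forallP => l.
rewrite !nth_pw; apply/andP; split; apply/implyP => //.
by case/andP => /eqP ->.
Qed.

Lemma matches_uniq n (Psi Phi : seq {set 'I_n}) u : is_setcomp Psi -> is_setcomp Phi ->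
  matches Psi u -> matches Phi u -> Psi = Phi.
Proof.
move=> s1 s2 m1 m2.
have e j l : (blk Psi j < blk Psi l) = (blk Phi j < blk Phi l).
  by rewrite -(matches_lt m1) (matches_lt m2).
apply: sc_det => // j; apply/eqP; rewrite eqn_leq.
by rewrite (blk_le s1 s2) ?(blk_le s2 s1) // => a b; rewrite e.
Qed.

Definition stdc n (w : word) : seq {set 'I_n} :=
  [seq [set j : 'I_n | nth 0 w j == v] | v <- sort leq (undup w)].

Lemma blk_stdc n (w : word) (j : 'I_n) :
  blk (stdc n w) j = index (nth 0 w j) (sort leq (undup w)).
Proof.
rewrite /blk /stdc find_map /index; apply: eq_find => v /=.
by rewrite inE eq_sym.
Qed.

Lemma stdc_ok n (w : word) : size w = n ->
  [/\ is_setcomp (stdc n w), matches (stdc n w) w & size (stdc n w) <= n].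
Proof.
move=> sw; set V := sort leq (undup w).
have Vu : uniq V by rewrite sort_uniq undup_uniq.
have Vs : sorted leq V by apply: sort_sorted; exact: leq_total.
have memV (j : 'I_n) : nth 0 w j \in V.
  by rewrite mem_sort mem_undup mem_nth // sw.
split.
- apply/and3P; split.
  + apply/allP => B /mapP [v vV ->]; apply/set0Pn.
    move: vV; rewrite mem_sort mem_undup => vw.
    have hi : index v w < n by rewrite -sw index_mem.
    by exists (Ordinal hi); rewrite inE /= nth_index.
  + rewrite pairwise_map; have pu : pairwise (fun x y : nat => x != y) V by rewrite -uniq_pairwise.
    apply: (sub_pairwise _ pu) => v v' /= ne.
    apply/pred0P => j /=; rewrite !inE; apply/negP => /andP [/eqP e1 /eqP e2].
    by move: ne; rewrite -e1 -e2 eqxx.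
  + apply/forallP => j; apply/hasP; exists [set l : 'I_n | nth 0 w l == nth 0 w j].
      by apply: map_f.
    by rewrite inE.
- rewrite /matches sw eqxx /=; apply/forallP => j; apply/forallP => l.
  rewrite !blk_stdc; apply/andP; split; apply/implyP.
  + move=> /eqP e; apply/eqP.
    by rewrite -(nth_index 0 (memV j)) e nth_index.
  + move=> lt; rewrite ltn_neqAle; apply/andP; split.
    * by apply/eqP => e; move: lt; rewrite e ltnn.
    * exact: (sorted_ltn_index leq_trans Vs _ _ (memV j) (memV l) lt).
- by rewrite size_map size_sort -sw size_undup.
Qed.


Lemma idx_flat (bs : seq (seq nat)) x k : x \in flatten bs ->
  (index x (flatten bs) < sumn (take k (map size bs))) = (find (fun b => x \in b) bs < k).
Proof.
elim: bs k => [|b bs IH] k //= xin.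
rewrite index_cat; case: ifP => xb.
- case: k => [|k] //=; rewrite ltn_addr // index_mem //.
- have xf : x \in flatten bs by move: xin; rewrite mem_cat xb.
  case: k => [|k] //=; rewrite ltn_add2l; exact: IH.
Qed.

Lemma idx_same (bs : seq (seq nat)) x y : all (sorted leq) bs ->
  x \in flatten bs -> y \in flatten bs ->
  find (fun b => x \in b) bs = find (fun b => y \in b) bs -> x < y ->
  index x (flatten bs) < index y (flatten bs).
Proof.
elim: bs => [|b bs IH] //= /andP [sb sbs] xin yin.
rewrite !index_cat; case: ifP => xb; case: ifP => yb //= e lt.
- rewrite ltnNge; apply/negP => le.
  have := sorted_leq_index leq_trans leqnn sb y x yb xb le.
  by rewrite leqNgt lt.
- have xf : x \in flatten bs by move: xin; rewrite mem_cat xb.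
  have yf : y \in flatten bs by move: yin; rewrite mem_cat yb.
  by rewrite ltn_add2l; apply: IH => //; case: e.
Qed.

Definition Sb n (Phi : seq {set 'I_n}) k := sumn (take k [seq size (block_word B) | B <- Phi]).

Lemma idxN n (Phi : seq {set 'I_n}) x k : x \in cword Phi ->
  (index x (cword Phi) < Sb Phi k) = (bk Phi x < k).
Proof.
move=> xin; rewrite /Sb /bk.
have -> : [seq size (block_word B) | B <- Phi] = map size (map (@block_word n) Phi) by rewrite -map_comp.
rewrite idx_flat // find_map //.
Qed.

Lemma idxO n (Phi : seq {set 'I_n}) (j : 'I_n) k : is_setcomp Phi ->
  (index (val j) (cword Phi) < Sb Phi k) = (blk Phi j < k).
Proof. by move=> sc; rewrite idxN ?bk_blk // (mem_cword_lt _ sc) ltn_ord. Qed.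

Lemma idx_sameO n (Phi : seq {set 'I_n}) (j l : 'I_n) : is_setcomp Phi ->
  blk Phi j = blk Phi l -> j < l -> index (val j) (cword Phi) < index (val l) (cword Phi).
Proof.
move=> sc e lt; apply: idx_same => //.
- by apply/allP => b /mapP [B _ ->]; apply: bw_sorted.
- by rewrite (mem_cword_lt _ sc) ltn_ord.
- by rewrite (mem_cword_lt _ sc) ltn_ord.
- by rewrite !find_map; change (bk Phi j = bk Phi l); rewrite !bk_blk.
Qed.

Definition lexlt n (Phi : seq {set 'I_n}) (j l : 'I_n) :=
  (blk Phi j < blk Phi l) || (blk Phi j == blk Phi l) && (j < l).

Lemma lex_idx n (Phi : seq {set 'I_n}) (j l : 'I_n) : is_setcomp Phi ->
  lexlt Phi j l -> index (val j) (cword Phi) < index (val l) (cword Phi).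
Proof.
move=> sc /orP [lt | /andP [/eqP e lt]]; last exact: idx_sameO.
have h1 : index (val j) (cword Phi) < Sb Phi (blk Phi l) by rewrite idxO.
have h2 : ~~ (index (val l) (cword Phi) < Sb Phi (blk Phi l)) by rewrite idxO // ltnn.
by rewrite -leqNgt in h2; apply: leq_trans h1 h2.
Qed.

Lemma lexchar n (Phi : seq {set 'I_n}) (j l : 'I_n) : is_setcomp Phi -> j != l ->
  (index (val j) (cword Phi) < index (val l) (cword Phi)) = lexlt Phi j l.
Proof.
move=> sc ne; apply/idP/idP; last exact: lex_idx.
move=> h; apply/negPn/negP => nl.
have : lexlt Phi l j.
  move: nl; rewrite /lexlt; case: (ltngtP (blk Phi j) (blk Phi l)) => //= c.
  rewrite -leqNgt => le.
  have ne' : val j != val l by [].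
  by rewrite ltn_neqAle le andbT eq_sym.
move/(lex_idx sc); rewrite ltnNge; move/negP; apply; exact: ltnW.
Qed.

Lemma in_bars n (Phi : seq {set 'I_n}) k : k <= size Phi -> Sb Phi k \in bars Phi.
Proof. by move=> hk; apply: map_f; rewrite mem_iota. Qed.

Lemma bars_in n (Phi : seq {set 'I_n}) b : b \in bars Phi -> exists2 k, k <= size Phi & b = Sb Phi k.
Proof. by case/mapP => k; rewrite mem_iota => /andP [_ hk] ->; exists k. Qed.

Lemma Sb_size n (Phi : seq {set 'I_n}) : is_setcomp Phi -> Sb Phi (size Phi) = n.
Proof.
move=> sc; rewrite /Sb -(size_map (fun B => size (block_word B))) take_size.
have := size_cword sc; by rewrite /cword size_flatten /shape -map_comp.
Qed.

Lemma Sb_le n (Phi : seq {set 'I_n}) k : is_setcomp Phi -> Sb Phi k <= n.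
Proof.
move=> sc; rewrite -{2}(Sb_size sc) /Sb.
rewrite -(size_map (fun B => size (block_word B))) take_size.
by rewrite -{2}(cat_take_drop k [seq size (block_word B) | B <- Phi]) sumn_cat leq_addr.
Qed.

Lemma reforms_iff n (Psi Phi : seq {set 'I_n}) : is_setcomp Psi -> is_setcomp Phi ->
  reforms Psi Phi = Fcond Phi (pw Psi).
Proof.
move=> s1 s2; apply/idP/idP.
- case/andP => /eqP Hc /allP Hb.
  rewrite /Fcond size_pw eqxx /=; apply/forallP => j; apply/forallP => l.
  rewrite !nth_pw; apply/andP; split; apply/implyP.
  + case/andP => /eqP e le; case: (eqVneq j l) => [-> //|ne].
    have lt : j < l.
      have ne' : val j != val l by [].
      by rewrite ltn_neqAle ne' le.
    have := lex_idx s2 (j := j) (l := l); rewrite /lexlt e eqxx lt orbT => /(_ isT).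
    rewrite -Hc (lexchar s1 ne) /lexlt => /orP [/ltnW //| /andP [/eqP -> _]] //.
  + move=> lt; have ne : j != l by apply/eqP => e; move: lt; rewrite e ltnn.
    have := lex_idx s2 (j := j) (l := l); rewrite /lexlt lt => /(_ isT).
    rewrite -Hc (lexchar s1 ne) /lexlt => /orP [// | /andP [/eqP e _]].
    have bl : blk Phi l <= size Phi by apply: ltnW; apply: blk_lt.
    have := Hb _ (in_bars bl); move=> /bars_in [k' _ hk'].
    have h1 : index (val j) (cword Phi) < Sb Phi (blk Phi l) by rewrite idxO.
    have h2 : ~~ (index (val l) (cword Phi) < Sb Phi (blk Phi l)) by rewrite idxO // ltnn.
    rewrite hk' -Hc !idxO // in h1 h2.
    by move: h2; rewrite -e h1.
- move/FcondP => [_ H].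
  have R1 j l : blk Phi j < blk Phi l -> blk Psi j < blk Psi l.
    by move=> lt; have := (H j l).2 lt; rewrite !nth_pw.
  have R2 j l : blk Phi j = blk Phi l -> j <= l -> blk Psi j <= blk Psi l.
    by move=> e le; have := (H j l).1 e le; rewrite !nth_pw.
  have Rl j l : lexlt Phi j l -> lexlt Psi j l.
    case/orP => [lt | /andP [/eqP e lt]]; first by rewrite /lexlt R1.
    have := R2 j l e (ltnW lt); rewrite leq_eqVlt /lexlt => /orP [->|->] //.
    by rewrite lt orbT.
  have uc1 : uniq (cword Psi) by apply: cword_uniq; case/scP: s1.
  have uc2 : uniq (cword Phi) by apply: cword_uniq; case/scP: s2.
  have Hc : cword Psi = cword Phi.
    apply: (irr_sorted_eq (leT := fun x y => index x (cword Psi) < index y (cword Psi))).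
    + by move=> ? ? ?; apply: ltn_trans.
    + by move=> x; apply: ltnn.
    + apply/(sortedP 0) => i hi.
      by rewrite !index_uniq // ltnW.
    + apply/(sortedP 0) => i hi.
      have hi' : i < size (cword Phi) by apply: ltnW.
      have xn : nth 0 (cword Phi) i < n by rewrite -(mem_cword_lt _ s2) mem_nth.
      have yn : nth 0 (cword Phi) i.+1 < n by rewrite -(mem_cword_lt _ s2) mem_nth.
      have ne : Ordinal xn != Ordinal yn.
        by rewrite -val_eqE /= nth_uniq // neq_ltn ltnSn.
      have := lexchar s1 ne; rewrite /= => ->; apply: Rl.
      have := lexchar s2 ne; rewrite /= => <-.
      by rewrite !index_uniq.
    + by move=> x; rewrite (mem_cword_lt _ s1) (mem_cword_lt _ s2).
  rewrite /reforms Hc eqxx andTb; apply/allP => x /bars_in [k hk ->].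
  have Sn := Sb_le k s2.
  have sc : size (cword Phi) = n by apply: size_cword.
  case: (posnP (Sb Phi k)) => [e0 | b0].
    by rewrite e0; have := in_bars (Phi := Psi) (k := 0) (leq0n _); rewrite /Sb take0.
  have [bn | bn] : Sb Phi k < n \/ Sb Phi k = n by lia.
  2: by rewrite bn -{1}(Sb_size s1) in_bars.
  set b := Sb Phi k in b0 bn Sn *.
  have xin : b.-1 < size (cword Phi) by rewrite sc; lia.
  have yin : b < size (cword Phi) by rewrite sc.
  have xn : nth 0 (cword Phi) b.-1 < n by rewrite -(mem_cword_lt _ s2) mem_nth.
  have yn : nth 0 (cword Phi) b < n by rewrite -(mem_cword_lt _ s2) mem_nth.
  have ix : index (val (Ordinal xn)) (cword Phi) = b.-1 by rewrite /= index_uniq.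
  have iy : index (val (Ordinal yn)) (cword Phi) = b by rewrite /= index_uniq.
  have h1 := idxO (Ordinal xn) k s2; rewrite ix /b ltn_predL b0 in h1.
  have h2 := idxO (Ordinal yn) k s2; rewrite iy ltnn in h2.
  have lt : blk Phi (Ordinal xn) < blk Phi (Ordinal yn).
    by apply: (leq_trans (esym h1)); rewrite leqNgt -h2.
  have lt' := R1 _ _ lt.
  have g1 := idxO (Ordinal xn) (blk Psi (Ordinal yn)) s1.
  have g2 := idxO (Ordinal yn) (blk Psi (Ordinal yn)) s1.
  rewrite Hc ix lt' in g1; rewrite Hc iy ltnn in g2.
  have -> : b = Sb Psi (blk Psi (Ordinal yn)).
    move: g1 g2; rewrite /b; lia.
  by apply: in_bars; apply: ltnW; apply: blk_lt.
Qed.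


Lemma sc_size n (Phi : seq {set 'I_n}) : is_setcomp Phi -> size Phi <= n.
Proof.
move=> sc; apply: (@leq_trans (Sb Phi (size Phi))); last by rewrite Sb_size.
rewrite /Sb -(size_map (fun B => size (block_word B))) take_size.
case/scP: sc => h _ _; elim: Phi h => [//|B Phi IH] h /=.
have := bw_size (h B (mem_head _ _)) => hb.
have := IH (fun C CP => h C (mem_behead (s := B :: Phi) CP)); rewrite size_map in IH *; lia.
Qed.

Local Open Scope ring_scope.

Lemma sum_setcomp0 (R : nzRingType) n (P : seq {set 'I_n} -> bool) (G : seq {set 'I_n} -> R) :
  (forall Psi, is_setcomp Psi -> P Psi -> G Psi = 0) -> sum_setcomp P G = 0.
Proof.
move=> h; rewrite /sum_setcomp big1 // => k _; apply: big1 => t /andP [s p]; exact: h.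
Qed.

Lemma sum_setcomp_eq (R : nzRingType) n (P : seq {set 'I_n} -> bool) (G1 G2 : seq {set 'I_n} -> R) :
  (forall Psi, is_setcomp Psi -> P Psi -> G1 Psi = G2 Psi) -> sum_setcomp P G1 = sum_setcomp P G2.
Proof.
move=> h; rewrite /sum_setcomp; apply: eq_bigr => k _; apply: eq_bigr => t /andP [s p]; exact: h.
Qed.

Lemma sum_setcomp_eqP (R : nzRingType) n (P1 P2 : seq {set 'I_n} -> bool) (G : seq {set 'I_n} -> R) :
  P1 =1 P2 -> sum_setcomp P1 G = sum_setcomp P2 G.
Proof.
move=> h; rewrite /sum_setcomp; apply: eq_bigr => k _; apply: eq_bigl => t; by rewrite h.
Qed.

Lemma sum_setcompD (R : nzRingType) n (P : seq {set 'I_n} -> bool) (G1 G2 : seq {set 'I_n} -> R) :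
  sum_setcomp P (fun Psi => G1 Psi + G2 Psi) = sum_setcomp P G1 + sum_setcomp P G2.
Proof.
rewrite /sum_setcomp -big_split; apply: eq_bigr => k _; by rewrite big_split.
Qed.

Lemma sum_single (R : nzRingType) n (P : seq {set 'I_n} -> bool) (G : seq {set 'I_n} -> R) Psi0 :
  (size Psi0 <= n)%N ->
  (forall Psi, is_setcomp Psi -> P Psi -> Psi != Psi0 -> G Psi = 0) ->
  sum_setcomp P G = if is_setcomp Psi0 && P Psi0 then G Psi0 else 0.
Proof.
move=> hs hG; rewrite /sum_setcomp.
have hs' : (size Psi0 < n.+1)%N by [].
rewrite (bigD1 (Ordinal hs')) //= [X in _ + X]big1 ?addr0; last first.
  move=> k nk; apply: big1 => t /andP [s p]; apply: hG => //.
  apply/eqP => e; move: nk; have := size_tuple t; rewrite e => ek.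
  by rewrite -val_eqE /= ek eqxx.
case: ifP => h.
- rewrite (bigD1 (in_tuple Psi0)) //= big1 ?addr0 // => t /andP [/andP [st pt] ne].
  have := ne; rewrite -val_eqE /= => ne'.
  exact: hG.
- rewrite big1 // => t /andP [s p]; apply: hG => //.
  by apply/eqP => e; move: h; rewrite -e s p.
Qed.

Lemma sum_setcomp_D1 (R : nzRingType) n (P : seq {set 'I_n} -> bool) (G : seq {set 'I_n} -> R) Phi :
  (size Phi <= n)%N ->
  sum_setcomp P G = (if is_setcomp Phi && P Phi then G Phi else 0) +
                    sum_setcomp (fun Psi => P Psi && (Psi != Phi)) G.
Proof.
move=> hs.
transitivity (sum_setcomp P (fun Psi => (if Psi == Phi then G Psi else 0) + (if Psi != Phi then G Psi else 0))).
  by apply: sum_setcomp_eq => Psi _ _; case: eqP; rewrite ?addr0 ?add0r.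
rewrite sum_setcompD (sum_single (Psi0 := Phi)) //; last first.
  by move=> Psi _ _ /negbTE ->.
rewrite eqxx; congr (_ + _); rewrite /sum_setcomp; apply: eq_bigr => k _.
rewrite -big_mkcondr; apply: eq_bigl => t; by rewrite andbA.
Qed.

Definition rk n (Phi : seq {set 'I_n}) : nat := (\sum_(j : 'I_n) blk Phi j)%N.

Lemma tri n (Psi Phi : seq {set 'I_n}) : is_setcomp Psi -> is_setcomp Phi ->
  Fcond Psi (pw Phi) -> (rk Psi <= rk Phi)%N /\ (Psi != Phi -> (rk Psi < rk Phi)%N).
Proof.
move=> s1 s2 /FcondP [_ H].
have le : forall j, (blk Psi j <= blk Phi j)%N.
  apply: blk_le => // j l lt; have := (H j l).2 lt; by rewrite !nth_pw.
split; first by apply: leq_sum => j _.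
move=> ne; case: (boolP [exists j, blk Psi j != blk Phi j]) => [/existsP [j hj] | hn].
- rewrite /rk (bigD1 j) //= [X in (_ < X)%N](bigD1 j) //=.
  rewrite -addSn; apply: leq_add; last by apply: leq_sum.
  by rewrite ltn_neqAle hj le.
- case/eqP: ne; apply: sc_det => // j; apply/eqP.
  by move: hn; rewrite negb_exists => /forallP /(_ j); rewrite negbK.
Qed.

Lemma rk_bound n (Phi : seq {set 'I_n}) : is_setcomp Phi -> (rk Phi < (n * n).+1)%N.
Proof.
move=> sc; rewrite ltnS /rk.
apply: (@leq_trans (\sum_(j : 'I_n) n)%N).
  apply: leq_sum => j _; apply: ltnW; apply: leq_trans (blk_lt j sc) (sc_size sc).
by rewrite sum_nat_const card_ord.
Qed.

Fixpoint solve (R : nzRingType) n (b : seq {set 'I_n} -> R) (m : nat) : seq {set 'I_n} -> R :=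
  match m with
  | 0 => fun _ => 0
  | m'.+1 => fun Psi => if rk Psi == m' then
        b Psi - sum_setcomp (fun Psi' => Psi' != Psi) (fun Psi' => solve b m' Psi' * Fser R Psi' (pw Psi))
      else solve b m' Psi
  end.

Lemma solveS (R : nzRingType) n (b : seq {set 'I_n} -> R) m Psi :
  solve b m.+1 Psi = if rk Psi == m then
        b Psi - sum_setcomp (fun Psi' => Psi' != Psi) (fun Psi' => solve b m Psi' * Fser R Psi' (pw Psi))
      else solve b m Psi.
Proof. by []. Qed.

Lemma solve_ok (R : nzRingType) n (b : seq {set 'I_n} -> R) m Phi :
  is_setcomp Phi -> (rk Phi < m)%N ->
  sum_setcomp (fun _ => true) (fun Psi => solve b m Psi * Fser R Psi (pw Phi)) = b Phi.
Proof.
elim: m Phi => [//|m IH] Phi sc hr.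
case: (ltngtP (rk Phi) m) => [lt | gt | eq].
- rewrite -(IH Phi sc lt); apply: sum_setcomp_eq => Psi s _.
  rewrite Fchar //; case f: (Fcond Psi (pw Phi)); last by rewrite !mulr0.
  have [le _] := tri s sc f.
  rewrite solveS (_ : (rk Psi == m) = false) //.
  by apply/negbTE; rewrite neq_ltn (leq_ltn_trans le lt).
- by move: hr; rewrite ltnS leqNgt gt.
- rewrite (@sum_setcomp_D1 _ _ _ _ Phi (sc_size sc)) sc /=.
  rewrite [Fser R Phi (pw Phi)]Fchar // Fcond_self mulr1 eq eqxx.
  rewrite [X in _ + X = _](_ : _ = sum_setcomp (fun Psi => Psi != Phi)
     (fun Psi => solve b m Psi * Fser R Psi (pw Phi))) ?subrK //.
  apply: sum_setcomp_eq => Psi s ne.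
  rewrite Fchar //; case f: (Fcond Psi (pw Phi)); last by rewrite !mulr0.
  have [_ lt] := tri s sc f.
  rewrite (_ : (rk Psi == m) = false) //.
  by apply/negbTE; rewrite neq_ltn -eq lt.
Qed.

Unset Implicit Arguments.
Local Open Scope ring_scope.

Theorem mainTheorem11 (R : fieldType) :
  (* F_Phi = sum of M_Psi over Psi reforming Phi *)
  (forall n (Phi : seq {set 'I_n}), is_setcomp Phi ->
     forall w : word,
       Fser R Phi w = sum_setcomp (fun Psi => reforms Psi Phi) (fun Psi => Mser R Psi w))
  /\
  (* {F_Phi} is a basis of NCQSym: (i) each F_Phi lies in NCQSym *)
  (forall n (Phi : seq {set 'I_n}), is_setcomp Phi -> in_NCQSym (Fser R Phi))
  /\
  (* (ii) linear independence *)
  (forall (d : nat) (c : forall n, seq {set 'I_n} -> R),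
     (forall w : word,
        \sum_(n < d) sum_setcomp (fun _ => true) (fun Psi => c n Psi * Fser R Psi w) = 0) ->
     forall n (Phi : seq {set 'I_n}), (n < d)%N -> is_setcomp Phi -> c n Phi = 0)
  /\
  (* (iii) spanning *)
  (forall f : series R, in_NCQSym f ->
     exists (d : nat) (c : forall n, seq {set 'I_n} -> R),
       forall w : word,
         f w = \sum_(n < d) sum_setcomp (fun _ => true) (fun Psi => c n Psi * Fser R Psi w)).
Proof.
split; [|split; [|split]].
- move=> n Phi sc w; rewrite Fchar //.
  case: (eqVneq (size w) n) => [sw | sw]; last first.
    rewrite /Fcond (negbTE sw) /=; symmetry; apply: sum_setcomp0 => Psi _ _.
    by rewrite /Mser /matches (negbTE sw).
  have [scs ms ss] := stdc_ok sw.
  rewrite (sum_single (Psi0 := stdc n w)) //; last first.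
    move=> Psi s _ ne; rewrite /Mser; case m: (matches Psi w) => //.
    by rewrite (matches_uniq s scs m ms) eqxx in ne.
  rewrite scs /= /Mser ms (reforms_iff scs sc).
  have [su hh] := matches_iso ms (matches_pw (stdc n w)).
  by rewrite (Fcond_iso Phi su hh); case: Fcond.
- move=> n Phi sc; split.
    exists n => w hw; rewrite Fchar // /Fcond.
    by rewrite (gtn_eqF hw).
  move=> m Psi sP u v mu mv; rewrite !Fchar //.
  have [su hh] := matches_iso mu mv.
  by rewrite (Fcond_iso Phi su hh).
- move=> d c H n Phi hn sc.
  suff: forall r (Phi' : seq {set 'I_n}), is_setcomp Phi' -> (rk Phi' < r)%N -> c n Phi' = 0.
    by move=> /(_ (rk Phi).+1 Phi sc (ltnSn _)).
  elim=> [//|r IH] Phi' sc' hr.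
  have := H (pw Phi'); rewrite (bigD1 (Ordinal hn)) //= [X in _ + X]big1 ?addr0; last first.
    move=> i ni; apply: sum_setcomp0 => Psi s _; rewrite Fchar // /Fcond size_pw.
    have ni' : (val i != n) := ni.
    by rewrite eq_sym (negbTE ni') mulr0.
  rewrite (sum_single (Psi0 := Phi')) ?(sc_size sc') //; last first.
    move=> Psi s _ ne; rewrite Fchar //.
    case f: (Fcond Psi (pw Phi')); last by rewrite mulr0.
    have [_ lt] := tri s sc' f.
    by rewrite IH ?mul0r // (leq_trans (lt ne)).
  by rewrite sc' /= Fchar // Fcond_self mulr1.
- move=> f [[D hD] hf].
  pose c := fun n => solve (fun Phi : seq {set 'I_n} => f (pw Phi)) (n * n).+1.
  exists D.+1, c => w.
  case: (ltnP D (size w)) => [big | small].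
    rewrite hD // big1 // => i _; apply: sum_setcomp0 => Psi s _.
    rewrite Fchar // /Fcond.
    have : (i < size w)%N by apply: leq_trans (ltn_ord i) big.
    by move=> /ltn_eqF; rewrite eq_sym => ->; rewrite mulr0.
  have hn : (size w < D.+1)%N by [].
  rewrite (bigD1 (Ordinal hn)) //= [X in _ + X]big1 ?addr0; last first.
    move=> i ni; apply: sum_setcomp0 => Psi s _; rewrite Fchar // /Fcond.
    have ni' : (val i != size w) := ni.
    by rewrite eq_sym (negbTE ni') mulr0.
  have [scs ms ss] := stdc_ok (erefl (size w)).
  set Phi0 := stdc (size w) w in scs ms ss *.
  have -> : f w = f (pw Phi0) by apply: (hf _ Phi0 scs) => //; apply: matches_pw.
  transitivity (sum_setcomp (fun _ => true) (fun Psi => solve (fun Phi : seq {set 'I_(size w)} => f (pw Phi)) (size w * size w).+1 Psi * Fser R Psi (pw Phi0))).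
    by symmetry; exact: (solve_ok _ scs (rk_bound scs)).
  apply: sum_setcomp_eq => Psi s _; congr (_ * _).
  rewrite !Fchar //.
  have [su hh] := matches_iso ms (matches_pw Phi0).
  by rewrite (Fcond_iso Psi su hh).
Qed.
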